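(* Let $m$ be a positive integer and let $\delta$ be a positive divisor of $\lambda(m)$. (1) $\displaystyle\sum_{\substack{a\in U_m\\ \mathrm{ind}_m(a)=1}}a\equiv 1\pmod m$. (2) If $\delta=2$ (so $2\mid\lambda(m)$), then $\displaystyle\sum_{\substack{a\in U_m\\ \mathrm{ind}_m(a)=2}}a\equiv -1\pmod m$. (3) If $4\mid\delta$, then $\displaystyle\sum_{\substack{a\in U_m\\ \mathrm{ind}_m(a)=\delta}}a\equiv 0\pmod m$.
   Context: $U_m$ denotes the set of invertible residue classes in $\mathbb{Z}/m\mathbb{Z}$ (sums run over one representative of each such class). For $a$ coprime to $m$, $\mathrm{ind}_m(a)$ is the multiplicative order of $a$ modulo $m$, i.e. the smallest positive $k$ with $a^k\equiv 1\pmod m$. $\lambda(m)$ is the Carmichael function: the smallest $k>0$ such that $a^k\equiv 1\pmod m$ for all $a\in U_m$. *)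

(* Defs.v *)
From mathcomp Require Import all_boot.
Set Implicit Arguments. Unset Strict Implicit. Unset Printing Implicit Defensive.

(* U_m is represented by the residues a < m with coprime a m
   (for m = 1 this is the single class of 0). *)

(* ind_m(a): the smallest positive k with a^k = 1 (mod m).
   For a coprime to m (m > 0) this order is <= totient m <= m, so the
   search over k = 1..m finds it. *)
Definition ind (m a : nat) : nat :=
  (find (fun k => a ^ k.+1 == 1 %[mod m]) (iota 0 m)).+1.

(* lambda(m): smallest positive k with a^k = 1 (mod m) for all a in U_m.
   It divides totient m <= m, so searching k = 1..m finds it. *)
Definition carmichael (m : nat) : nat :=
  (find (fun k => [forall a : 'I_m, coprime a m ==> (a ^ k.+1 == 1 %[mod m])])
        (iota 0 m)).+1.

(* Main.v *)
Require Import Defs.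
From mathcomp Require Import all_boot.
From mathcomp Require Import cyclic zify.

Lemma totient_le n : totient n <= n.
Proof.
rewrite totient_count_coprime.
have h : \sum_(0 <= d < n) coprime n d <= \sum_(0 <= d < n) 1.
  by apply: leq_sum => i _; exact: leq_b1.
by rewrite sum_nat_const_nat subn0 muln1 in h.
Qed.

Lemma find_iota (p : pred nat) n i :
  i < n -> p i -> (forall j, j < i -> ~~ p j) -> find p (iota 0 n) = i.
Proof.
move=> lin pi hj.
have hs : has p (iota 0 n) by apply/hasP; exists i => //; rewrite mem_iota.
have fl := hs; rewrite has_find size_iota in fl.
case: (ltngtP (find p (iota 0 n)) i) => // h.
- have := nth_find 0 hs; rewrite nth_iota // add0n => pf.
  by have := hj _ h; rewrite pf.
- have := before_find 0 h; rewrite nth_iota // add0n => pf.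
  by rewrite pi in pf.
Qed.

Lemma ind_spec m x d : 0 < d -> d <= m -> x ^ d = 1 %[mod m] ->
  (forall k, 0 < k < d -> x ^ k != 1 %[mod m]) -> ind m x = d.
Proof.
move=> d0 dm xd hk; rewrite /ind.
rewrite (@find_iota _ _ d.-1); first by rewrite prednK.
- by rewrite prednK.
- by rewrite prednK // xd.
move=> j hj; apply: hk; rewrite ltnS. by rewrite -ltn_predRL.
Qed.

Lemma ind_facts m x d : ind m x = d -> d <= m ->
  x ^ d = 1 %[mod m] /\ (forall k, 0 < k < d -> x ^ k != 1 %[mod m]).
Proof.
rewrite /ind => <- hd; split.
- have hs : has (fun k => x ^ k.+1 == 1 %[mod m]) (iota 0 m).
    by rewrite has_find size_iota.
  have hf : find (fun k => x ^ k.+1 == 1 %[mod m]) (iota 0 m) < m by [].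
  by have := nth_find 0 hs; rewrite nth_iota ?add0n // => /eqP.
- case=> // k /andP [_ hk].
  have := before_find 0 hk; rewrite nth_iota ?add0n => [->//|].
  apply: leq_trans hd; exact: ltnW.
Qed.

Lemma ind_le m a : 0 < m -> coprime a m -> 0 < ind m a <= m.
Proof.
move=> m0 co; rewrite /ind ltnS /=.
have hp : (fun k => a ^ k.+1 == 1 %[mod m]) (totient m).-1.
  by rewrite /= prednK ?totient_gt0 // Euler_exp_totient.
have hlt : (totient m).-1 < m.
  by rewrite prednK ?totient_gt0 // totient_le.
have hs : has (fun k => a ^ k.+1 == 1 %[mod m]) (iota 0 m).
  by apply/hasP; exists (totient m).-1 => //; rewrite mem_iota.
by rewrite has_find size_iota in hs.
Qed.

Lemma sq_neg m a : a <= m -> (m - a) ^ 2 = a ^ 2 %[mod m].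
Proof.
move=> am.
have e : (m - a) ^ 2 + (2 * a) * m = a ^ 2 + m * m.
  rewrite !expnS !expn0 !muln1. nia.
by rewrite -(modnMDl (2 * a)) addnC e addnC modnMDl.
Qed.

Lemma pow_even m a j : a <= m -> (m - a) ^ (2 * j) = a ^ (2 * j) %[mod m].
Proof.
move=> am; rewrite !expnM -modnXm sq_neg // modnXm //.
Qed.

Lemma ord_dvd m a k : 0 < m -> coprime a m -> a ^ k = 1 %[mod m] -> ind m a %| k.
Proof.
move=> m0 co hk.
have /andP [d0 dm] := @ind_le m a m0 co.
have [hd hlt] := @ind_facts m a (ind m a) (erefl _) dm.
set d := ind m a in d0 dm hd hlt *.
have ek : k = k %/ d * d + k %% d by rewrite -divn_eq.
have hr : a ^ (k %% d) = 1 %[mod m].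
  rewrite -hk {2}ek expnD [k %/ d * d]mulnC expnM -modnMml.
  have -> : (a ^ d) ^ (k %/ d) %% m = 1 %% m.
    by rewrite -modnXm hd modnXm exp1n.
  by rewrite modnMml mul1n.
rewrite /dvdn; case: (posnP (k %% d)) => [//|hpos].
have := hlt (k %% d); rewrite hpos ltn_pmod //= hr eqxx.
by move=> /(_ isT).
Qed.

Lemma coprime_neg m a : a <= m -> coprime a m = coprime (m - a) m.
Proof.
move=> am; rewrite /coprime.
have e : m = m - a + a by rewrite subnK.
have -> : gcdn a m = gcdn a (m - a) by rewrite {1}e gcdnDr.
have -> : gcdn (m - a) m = gcdn (m - a) a by rewrite {2}e gcdnDl.
by rewrite gcdnC.
Qed.

Lemma ind_neg m a : 0 < m -> a <= m -> coprime a m -> 4 %| ind m a ->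
  ind m (m - a) = ind m a.
Proof.
move=> m0 am co h4.
have /andP [d0 dm] := @ind_le m a m0 co.
have [hd hlt] := @ind_facts m a (ind m a) (erefl _) dm.
have [j ej] : exists j, ind m a = 2 * j.
  exists (ind m a %/ 2); rewrite mulnC divnK //; exact: dvdn_trans _ h4.
apply: ind_spec => //.
  by rewrite ej pow_even // -ej.
move=> k /andP [k0 kd].
case/boolP: (odd k) => ko.
- apply/negP => /eqP hk.
  have h2 : (m - a) ^ (2 * k) = 1 %[mod m].
    by rewrite mulnC expnM -modnXm hk modnXm exp1n.
  rewrite pow_even // in h2.
  have := @ord_dvd m a _ m0 co h2.
  move=> hdv; have : 4 %| 2 * k by apply: dvdn_trans h4 hdv.
  rewrite (_ : 4 = 2 * 2) // dvdn_pmul2l // dvdn2 ko //.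
- have [i ei] : exists i, k = 2 * i.
    by exists k./2; rewrite -[in LHS](odd_double_half k) (negbTE ko) add0n -mul2n.
  by rewrite ei pow_even -?ei; [apply: hlt; rewrite k0 | ].
Qed.

Lemma pair_sum m (P : nat -> bool) : 0 < m ->
  (forall i, i < m -> P i -> [/\ 0 < i, 2 * i != m & P (m - i)]) ->
  \sum_(a < m | P a) (a : nat) = 0 %[mod m].
Proof.
move=> m0 hP.
have P0 : P 0 = false by apply/negP => /(hP 0 m0) [].
pose f : 'I_m -> 'I_m := fun i => Ordinal (ltn_pmod (m - i) m0).
have fv : forall i : 'I_m, 0 < i -> val (f i) = m - i.
  move=> i i0 /=; rewrite modn_small //; have := ltn_ord i; lia.
have f0 : forall i : 'I_m, i = 0 :> nat -> val (f i) = 0.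
  by move=> i /= ->; rewrite subn0 modnn.
have fK : cancel f f.
  move=> i; apply: val_inj.
  case: (posnP i) => [i0|ip].
    by rewrite f0 // f0.
  have fi := fv i ip; have := ltn_ord i => lti.
  have fpos : 0 < f i by rewrite fi; lia.
  by rewrite (fv _ fpos) fi subKn //; exact: ltnW.
rewrite (bigID (fun i : 'I_m => 2 * i < m) (fun i : 'I_m => P i)) /=.
rewrite [X in _ + X](reindex_inj (can_inj fK)) /=.
have -> : \sum_(i < m | P (f i) && ~~ (2 * f i < m)) (f i : nat)
        = \sum_(i < m | P i && (2 * i < m)) (m - i).
  apply: eq_big.
  - move=> i; case: (posnP i) => [i0|ip].
      by rewrite f0 // i0 P0.
    rewrite fv //.
    case Pi: (P i).
      have [_ h2 Pm] := hP i (ltn_ord i) Pi.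
      rewrite Pm /=; move: h2; have := ltn_ord i; lia.
    case Pmi: (P (m - i)) => //.
    have := hP (m - i) _ Pmi; rewrite subKn ?Pi; last exact: ltnW.
    by case=> //; have := ltn_ord i; lia.
  - move=> i /andP [Pi _]; case: (posnP i) => [i0|ip]; last by rewrite fv.
    by move: Pi; rewrite f0 // P0.
rewrite -big_split /=.
have : m %| \sum_(i < m | P i && (2 * i < m)) (i + (m - i)).
  apply: dvdn_sum => i /andP [Pi _].
  by rewrite subnKC ?dvdnn //; apply: ltnW.
by move=> /eqP ->; rewrite mod0n.
Qed.

Lemma ind1 m x : 0 < m -> (ind m x == 1) = (x %% m == 1 %% m).
Proof.
case: m => // m' _; rewrite /ind /=.
by case: ifP => // _; rewrite expn1.
Qed.

Lemma carm2 : carmichael 2 = 1.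
Proof.
have h : [forall a : 'I_2, coprime a 2 ==> (a ^ 1 == 1 %[mod 2])].
  by apply/forallP => -[[|[|]]] //.
by rewrite /carmichael /= h.
Qed.

Lemma cop_facts m i : 2 < m -> coprime i m -> 0 < i /\ 2 * i != m.
Proof.
move=> m2 co; split.
  case: (posnP i) => // i0; move: co; rewrite i0 /coprime gcd0n; lia.
apply/eqP => e; move: co; rewrite -e /coprime gcdnMl => /eqP i1.
lia.
Qed.

Theorem theorem1p6 (m delta : nat) :
  0 < m -> 0 < delta -> delta %| carmichael m ->
  [/\ \sum_(a < m | coprime a m && (ind m a == 1)) (a : nat) = 1 %[mod m],
      (delta = 2 ->
        (\sum_(a < m | coprime a m && (ind m a == 2)) (a : nat)) + 1 = 0 %[mod m])
    & (4 %| delta ->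
        \sum_(a < m | coprime a m && (ind m a == delta)) (a : nat) = 0 %[mod m])].
Proof.
move=> m0 d0 dd.
case: (ltngtP m 1) => [|m1|m1]; first lia; last by subst; rewrite !modn1.
split.
- pose j : 'I_m := Ordinal m1.
  rewrite (eq_bigl (fun a => a == j)) ?big_pred1_eq //.
  move=> a /=; rewrite ind1 // modn_small // modn_small //.
  have -> : (a == j) = (nat_of_ord a == 1) by [].
  by case: (nat_of_ord a =P 1) => [->|]; [rewrite coprime1n | rewrite andbF].
- move=> dl; subst delta.
  have m3 : m = 2 -> False.
    by move=> e; move: dd; rewrite e carm2.
  have m2 : 2 < m by move: m3 m1; lia.
  have lt : m - 1 < m by lia.
  pose j : 'I_m := Ordinal lt.
  have coj : coprime (m - 1) m by rewrite -coprime_neg ?coprime1n //; lia.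
  have ij : ind m (m - 1) = 2.
    apply: ind_spec => //.
      by have := @pow_even m 1 1; rewrite muln1 exp1n => ->; lia.
    move=> k /andP [k0 k2]; have -> : k = 1 by lia.
    rewrite expn1 modn_small ?modn_small //; lia.
  rewrite (bigD1 j) /=; last by rewrite coj ij.
  rewrite addnAC subnK; last lia.
  rewrite modnDl.
  apply: (@pair_sum m (fun a : nat => coprime a m && (ind m a == 2) && (a != m - 1)) m0).
  move=> i im /andP [/andP [co /eqP ii] ne].
  have [i0 i2] := @cop_facts m i m2 co.
  have [hs h1] := @ind_facts m i 2 ii (ltnW m2).
  have i1 : i != 1.
    by apply/eqP => e; move: (h1 1 isT); rewrite e eqxx.
  split => //.
  rewrite -coprime_neg ?(ltnW im) // co /=.
  apply/andP; split.
    apply/eqP; apply: ind_spec => //.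
      by have := @pow_even m i 1; rewrite muln1 => ->; rewrite ?(ltnW im).
    move=> k /andP [k0 k2]; have -> : k = 1 by lia.
    rewrite expn1 modn_small ?modn_small //; try lia.
  lia.
- move=> h4.
  have m3 : m = 2 -> False.
    move=> e; move: dd; rewrite e carm2 dvdn1 => /eqP e2; move: h4; rewrite e2 //.
  have m2 : 2 < m by move: m3 m1; lia.
  apply: (@pair_sum m (fun a : nat => coprime a m && (ind m a == delta)) m0).
  move=> i im /andP [co /eqP ii].
  have [i0 i2] := @cop_facts m i m2 co.
  split => //.
  rewrite -coprime_neg ?(ltnW im) // co /= ind_neg ?ii // ltnW //.
Qed.
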